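(* For all positive integers $N$ (number of files) and $K$ (number of users) and every $M\in[0,N]$, the memory-rate pair $\left(M,\ \min\{N,K\}\left(1-\frac{M}{N}\right)\right)$ is achievable with demand privacy for the $(N,K)$ coded caching problem.
   Context: Demand-private coded caching model: a server holds $N$ independent files $W_0,\dots,W_{N-1}$, each uniformly distributed on $[2^F]:=\{0,1,\dots,2^F-1\}$ (i.e. $F$ bits), and is connected to $K$ users by a noiseless broadcast link. Write $[n]=\{0,1,\dots,n-1\}$ and $\bar W=(W_0,\dots,W_{N-1})$. User $k\in[K]$ demands file index $D_k$; the $D_k$ are independent and uniform on $[N]$; $\bar D=(D_0,\dots,D_{K-1})$ and $\tilde D_k$ denotes all demands except $D_k$. User $k$ shares with the server a random key $S_k$ taking values in a finite set $\mathcal S_k$ (unknown to other users), $\bar S=(S_0,\dots,S_{K-1})$, and the server has private randomness $P$ in a finite set $\mathcal P$; the random variables $P$, the $S_k$, the $D_k$ and the $W_i$ are mutually independent. An $(N,K,M,R)$-private scheme consists of cache encoders $C_k:\mathcal S_k\times\mathcal P\times[2^F]^N\to[2^{MF}]$, with cache content $Z_k=(C_k(S_k,P,\bar W),S_k)$; a transmission encoder $E:[2^F]^N\times[N]^K\times\mathcal P\times\mathcal S_0\times\dots\times\mathcal S_{K-1}\to[2^{RF}]$ and an auxiliary encoder $J:[N]^K\times\mathcal P\times\mathcal S_0\times\dots\times\mathcal S_{K-1}\to\mathcal J$, where $\log_2|\mathcal J|$ is negligible compared to $F$; the broadcast message is $X=(E(\bar W,\bar D,P,\bar S),J(\bar D,P,\bar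 S))$; and decoders $G_k$ such that user $k$ recovers $W_{D_k}=G_k(D_k,S_k,J(\bar D,P,\bar S),E(\bar W,\bar D,P,\bar S),C_k(S_k,P,\bar W))$ for all values, while the privacy condition $I(\tilde D_k; Z_k, X, D_k)=0$ holds for every $k\in[K]$. A pair $(M,R)$ is achievable with demand privacy for the $(N,K)$ coded caching problem if an $(N,K,M,R)$-private scheme exists for some $F$. *)

(* Defs.v *)
From HB Require Import structures.
From mathcomp Require Import all_boot all_order all_algebra.
From mathcomp Require Import reals exp Rstruct.
From Stdlib Require Rdefinitions.
Notation R := Rdefinitions.R.

Set Implicit Arguments.
Unset Strict Implicit.
Unset Printing Implicit Defensive.

Import Order.TTheory GRing.Theory Num.Theory.
Local Open Scope ring_scope.

Definition log2 (x : R) : R := ln x / ln 2.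

Definition is_pmf (T : finType) (p : T -> R) : Prop :=
  (forall t, 0 <= p t) /\ \sum_(t : T) p t = 1.

Definition mutual_info (Om : finType) (mu : Om -> R)
    (alpha beta : finType) (A : Om -> alpha) (B : Om -> beta) : R :=
  \sum_(a : alpha) \sum_(b : beta)
    let pab := \sum_(w : Om | (A w == a) && (B w == b)) mu w in
    let pa := \sum_(w : Om | A w == a) mu w in
    let pb := \sum_(w : Om | B w == b) mu w in
    if pab == 0 then 0 else pab * log2 (pab / (pa * pb)).

Definition fileT (F : nat) := 'I_(2 ^ F).
Definition libT (N F : nat) := {ffun 'I_N -> fileT F}.
Definition demT (N K : nat) := {ffun 'I_K -> 'I_N}.

(* D~_k : all demands except D_k (encoded as the demand vector with the
   k-th entry erased). *)
Definition other_demands (N K : nat) (k : 'I_K) (d : demT N K)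
  : {ffun 'I_K -> option 'I_N} :=
  [ffun j => if j == k then None else Some (d j)].

(* An (N,K,M,R)-private scheme with file size F bits, whose auxiliary
   transmission alphabet J satisfies log2 |J| <= eps * F.
   [2^x] = {i in nat | i < 2^x}; a map into [2^x] is modelled as a map
   into an ordinal type 'I_c all of whose elements are < 2^x. *)
Definition private_scheme (N K : nat) (M Rt : R) (F : nat) (eps : R) : Prop :=
  exists (Pt : finType) (pP : Pt -> R)
         (S : 'I_K -> finType) (pS : forall k : 'I_K, S k -> R)
         (cM cR : nat) (Jt : finType)
         (C : forall k : 'I_K, S k -> Pt -> libT N F -> 'I_cM)
         (E : libT N F -> demT N K -> Pt -> {dffun forall k : 'I_K, S k} -> 'I_cR)
         (J : demT N K -> Pt -> {dffun forall k : 'I_K, S k} -> Jt)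
         (G : forall k : 'I_K, 'I_N -> S k -> Jt -> 'I_cR -> 'I_cM -> fileT F),
        is_pmf pP /\ (forall k, is_pmf (pS k)) /\
        (forall i : 'I_cM, (i%:R : R) < powR 2 (M * F%:R)) /\
        (forall i : 'I_cR, (i%:R : R) < powR 2 (Rt * F%:R)) /\
        log2 (#|Jt|%:R) <= eps * F%:R /\
        (forall (w : libT N F) (d : demT N K) (p : Pt)
                (s : {dffun forall k : 'I_K, S k}) (k : 'I_K),
            G k (d k) (s k) (J d p s) (E w d p s) (C k (s k) p w) = w (d k)) /\
        ((* demand privacy: I(D~_k ; Z_k, X, D_k) = 0 for every k, where
           P, the S_k, the D_k (uniform on [N]) and the W_i (uniform on
           [2^F]) are mutually independent *)
        let Om := (Pt * {dffun forall k : 'I_K, S k} * libT N F * demT N K)%type in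
        let mu := fun om : Om =>
          let: (p, s, _, _) := om in
          pP p * (\prod_(k : 'I_K) pS k (s k))
            * ((2 ^ F)%:R ^- N) * (N%:R ^- K) in
        forall k : 'I_K,
          mutual_info mu
            (fun om : Om => let: (_, _, _, d) := om in other_demands k d)
            (fun om : Om => let: (p, s, w, d) := om in
               ((C k (s k) p w, s k), (E w d p s, J d p s), d k)) = 0).

Definition achievable_private (N K : nat) (M Rt : R) : Prop :=
  forall eps : R, 0 < eps ->
    exists F : nat, (0 < F)%N /\ private_scheme N K M Rt F eps.

(* Main.v *)
Require Import Defs.
From HB Require Import structures.
From mathcomp Require Import all_boot all_order all_algebra.
From mathcomp Require Import reals exp Rstruct.
From mathcomp Require Import ring lra.

Set Implicit Arguments.
Unset Strict Implicit.
Unset Printing Implicit Defensive.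
Import Order.TTheory GRing.Theory Num.Theory.
Local Open Scope ring_scope.
Section MI.
Variables (Pt Sf Lib beta : finType) (N K : nat) (k : 'I_K).
Local Notation Om := (Pt * Sf * Lib * demT N K)%type.

Lemma sum_Om (Fn : Pt -> Sf -> Lib -> demT N K -> R) :
  \sum_(om : Om) (let: (p, s, w, d) := om in Fn p s w d) =
  \sum_d \sum_w \sum_p \sum_s Fn p s w d.
Proof.
symmetry.
rewrite (eq_bigr (fun d => \sum_(x : Pt * Sf * Lib) Fn x.1.1 x.1.2 x.2 d)); last first.
  move=> d _.
  rewrite -(pair_bigA _ (fun ps w => Fn ps.1 ps.2 w d)) /=.
  rewrite -(pair_bigA _ (fun p s => \sum_w Fn p s w d)) /=.
  rewrite exchange_big; apply: eq_bigr => p _; by rewrite exchange_big.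
rewrite exchange_big.
rewrite (pair_bigA _ (fun x d => Fn x.1.1 x.1.2 x.2 d)) /=.
by apply: eq_bigr => -[[[p s] w] d].
Qed.

Lemma D2 (H : 'I_N -> R) :
  \sum_(d : demT N K) H (d k) = (N ^ K.-1)%:R * \sum_x H x.
Proof.
have -> : \sum_(d : demT N K) H (d k) =
   \sum_(d : demT N K) \prod_(j : 'I_K) (if j == k then H (d j) else 1).
  apply: eq_bigr => d _; rewrite (bigD1 k) //= eqxx big1 ?mulr1 //.
  by move=> j /negbTE ->.
rewrite -(@bigA_distr_bigA _ _ _ _ _ _ _ (fun (j : 'I_K) (y : 'I_N) => if j == k then H y else 1)) /= (bigD1 k) //= eqxx.
rewrite [X in _ * X](eq_bigr (fun _ => N%:R)); last first.
  by move=> j /negbTE ->; rewrite sumr_const card_ord.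
rewrite prodr_const cardC1 card_ord -natrX mulrC.
by apply: congr2 => //; apply: eq_bigr => x _; rewrite eqxx.
Qed.

Definition upd (d0 : demT N K) (x : 'I_N) : demT N K :=
  [ffun j => if j == k then x else d0 j].

Lemma D1 (d0 : demT N K) (H : 'I_N -> R) :
  \sum_(d : demT N K) (if other_demands k d == other_demands k d0 then H (d k) else 0)
  = \sum_x H x.
Proof.
have -> : \sum_(d : demT N K) (if other_demands k d == other_demands k d0 then H (d k) else 0)
   = \sum_(d : demT N K) \sum_x (if d == upd d0 x then H x else 0).
  apply: eq_bigr => d _.
  case: ifP => [/eqP hA | hA].
    rewrite (bigD1 (d k)) //= big1 ?addr0.
      suff -> : d == upd d0 (d k) by [].
      apply/eqP/ffunP => j; rewrite ffunE; case: ifP => [/eqP -> //|hj].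
      move/ffunP: hA => /(_ j); rewrite !ffunE hj; by case.
    move=> x hx; case: ifP => // /eqP hd.
    by move: hx; rewrite hd ffunE eqxx eqxx.
  rewrite big1 // => x _; case: ifP => // /eqP hd.
  move: hA; rewrite hd; suff -> : other_demands k (upd d0 x) = other_demands k d0 by rewrite eqxx.
  by apply/ffunP => j; rewrite !ffunE; case: (j == k).
rewrite exchange_big /=; apply: eq_bigr => x _.
by rewrite -big_mkcond /= big_pred1_eq.
Qed.


Lemma conv_sum (P : Pt -> Sf -> Lib -> demT N K -> bool) (V : Pt -> Sf -> R) (c1 c2 : R) :
  \sum_(om : Om | (let: (p, s, w, d) := om in P p s w d))
     (let: (p, s, _, _) := om in V p s * c1 * c2) =
  c1 * c2 * \sum_d \sum_w \sum_p \sum_s (if P p s w d then V p s else 0).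
Proof.
rewrite big_mkcond /=.
rewrite (eq_bigr (fun om : Om => let: (p, s, w, d) := om in
   (if P p s w d then V p s * c1 * c2 else 0))); last by case=> [[[p s] w] d].
rewrite sum_Om big_distrr; apply: eq_bigr => d _.
rewrite big_distrr; apply: eq_bigr => w _.
rewrite big_distrr; apply: eq_bigr => p _.
rewrite big_distrr; apply: eq_bigr => s _.
by case: ifP => _ /=; [ring | rewrite mulr0].
Qed.

Lemma mi0 (h : Pt -> Sf -> R) (cW cD : R)
  (obs : Pt -> Sf -> Lib -> demT N K -> beta)
  (obs' : Pt -> Sf -> Lib -> 'I_N -> beta)
  (phi : Lib -> demT N K -> Sf -> Sf) :
  (forall w d, injective (phi w d)) ->
  (forall p w d s, h p (phi w d s) = h p s) ->
  (forall p s w d, obs p (phi w d s) w d = obs' p s w (d k)) ->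
  cW * cD * (N ^ K)%:R * #|Lib|%:R * (\sum_p \sum_s h p s) = 1 ->
  mutual_info (fun om : Om => let: (p, s, _, _) := om in h p s * cW * cD)
    (fun om : Om => let: (_, _, _, d) := om in other_demands k d)
    (fun om : Om => let: (p, s, w, d) := om in obs p s w d) = 0.
Proof.
move=> phi_inj hphi hobs hnorm.
rewrite /mutual_info; apply: big1 => a _; apply: big1 => b _.
rewrite /=.
set pab := (\sum_(w | _ && _) _).
set pa := (\sum_(w | _ == a) _).
set pb := (\sum_(w | _ == b) _).
set T := \sum_p \sum_s h p s.
set G := fun x => \sum_w \sum_p \sum_s (if obs' p s w x == b then h p s else 0).
have reid : forall w d p, \sum_s (if obs p s w d == b then h p s else 0) =
     \sum_s (if obs' p s w (d k) == b then h p s else 0).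
  move=> w d p; rewrite (reindex_inj (phi_inj w d)) /=.
  by apply: eq_bigr => s _; rewrite hobs hphi.
have Epab : pab = cW * cD * \sum_d (if other_demands k d == a then G (d k) else 0).
  rewrite /pab.
  rewrite (eq_bigl (fun om : Om => let: (p, s, w, d) := om in
     (other_demands k d == a) && (obs p s w d == b))); last by case=> [[[p s] w] d].
  rewrite conv_sum; congr (_ * _); apply: eq_bigr => d _.
  case: ifP => hd; last by rewrite big1 // => w _; rewrite big1 // => p _; rewrite big1 // => s _; rewrite hd.
  rewrite /G; apply: eq_bigr => w _; apply: eq_bigr => p _.
  by rewrite -reid.
have Epa : pa = cW * cD * \sum_d (if other_demands k d == a then #|Lib|%:R * T else 0).
  rewrite /pa.
  rewrite (eq_bigl (fun om : Om => let: (p, s, w, d) := om in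
     (other_demands k d == a))); last by case=> [[[p s] w] d].
  rewrite conv_sum; congr (_ * _); apply: eq_bigr => d _.
  case: ifP => hd; last by rewrite big1 // => w _; rewrite big1 // => p _; rewrite big1 // => s _; rewrite hd.
  rewrite (eq_bigr (fun _ => T)); last by move=> w _; apply: eq_bigr => p _; apply: eq_bigr => s _; rewrite ?hd.
  by rewrite big_const iter_addr_0 mulr_natl.
have Epb : pb = cW * cD * \sum_(d : demT N K) G (d k).
  rewrite /pb.
  rewrite (eq_bigl (fun om : Om => let: (p, s, w, d) := om in
     (obs p s w d == b))); last by case=> [[[p s] w] d].
  rewrite conv_sum; congr (_ * _); apply: eq_bigr => d _.
  rewrite /G; apply: eq_bigr => w _; apply: eq_bigr => p _.
  by rewrite -reid.
case: (boolP [exists d0, other_demands k d0 == a]) => [/existsP [d0 /eqP hd0] | hne]; last first.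
  suff -> : pab = 0 by rewrite eqxx.
  rewrite Epab big1 ?mulr0 // => d _; case: ifP => // hd.
  by move/existsP: hne; case; exists d.
case: ifP => // /negbT hpab.
have hK : (0 < K)%N by case: k => /= i hi; apply: leq_ltn_trans hi.
have E1 : pa * pb = pab.
  rewrite Epa Epb Epab -hd0 (D1 d0 (fun _ => #|Lib|%:R * T)) (D1 d0 G) D2.
  rewrite big_const iter_addr_0 card_ord -mulr_natl.
  transitivity (cW * cD * (\sum_x G x) * (cW * cD * (N ^ K)%:R * #|Lib|%:R * T)); last first.
    by rewrite hnorm mulr1.
  rewrite -(prednK hK) expnS natrM -mulr_natl.
  ring.
rewrite E1 divff // /log2 ln1 mul0r mulr0 //.
Qed.

End MI.
From mathcomp Require Import zify.

Lemma pow2R (x : nat) : powR (2 : R) x%:R = (2 ^ x)%:R.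
Proof. by rewrite powR_mulrn // natrX. Qed.

Lemma lt_pow (b : nat) (y : R) : b%:R <= y -> ((2 ^ b).-1)%:R < powR 2 y.
Proof.
move=> hb; apply: (@lt_le_trans _ _ (2 ^ b)%:R).
  by rewrite ltr_nat ltn_predL expn_gt0.
by rewrite -pow2R; apply: ler_powR => //; rewrite ler1n.
Qed.

Lemma powR_gt1 (y : R) : 0 < y -> 1 < powR 2 y.
Proof.
move=> hy; rewrite /powR (negbTE (_ : (2:R) != 0)) //.
rewrite expR_gt1 mulr_gt0 // ?ln_gt0 // ?ltr1n //.
by rewrite pnatr_eq0.
Qed.

Lemma FE_nat (F q KN : nat) : (2*KN <= q)%N -> (q + 2 < F)%N -> (1 <= KN)%N ->
  (F - q - 2 + 2 * KN + (q - 2 * KN.-1) = F)%N.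
Proof. lia. Qed.

Lemma cb_nat (n q KN : nat) : (2*KN <= q)%N -> (1 <= KN)%N ->
  (n.+1 * (q - 2 * KN.-1) + n.+1 * (2 * KN.-1) = n.+1 * q)%N.
Proof. lia. Qed.

Lemma aux1 (q F : nat) : (q + 2 < F)%N -> (1 < F - q)%N /\ (q <= F)%N.
Proof. lia. Qed.

Lemma feas (n m : nat) (M eps : R) : 0 <= M <= n.+1%:R -> 0 < eps ->
 exists a c e : nat, let F := (a + c * (m.+1 * n.+1) + e)%N in (0 < F)%N /\
   ((2 ^ (n.+1 * e + n.+1 * (c * (m.+1 * n.+1).-1))).-1%:R < powR 2 (M * F%:R)) /\
   ((2 ^ ((minn n m).+1 * a + c)).-1%:R <
        powR 2 (Num.min n.+1%:R m.+1%:R * (1 - M / n.+1%:R) * F%:R)) /\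
   (c = 0%N \/ log2 ((n.+1 ^ m.+1)%:R) <= eps * F%:R).
Proof.
move=> /andP [M0 MN] eps0.
have NN0 : 0 < n.+1%:R :> R by rewrite ltr0n.
have hmin : Num.min n.+1%:R m.+1%:R = (minn n m).+1%:R :> R.
  by rewrite -natr_min minEnat minnSS.
rewrite hmin.
case: (eqVneq M n.+1%:R) => [-> | hMN].
  exists 0%N, 0%N, 1%N => /=; split => //; split.
    by apply: lt_pow; rewrite !muln0 !addn0 muln1 mulr1.
  split; last by left.
  by rewrite !muln0 addn0 expn0 /=; apply: powR_gt0.
have hMN' : M < n.+1%:R by rewrite lt_neqAle hMN.
have hsimple : (M == 0) || (minn n m == 0)%N ->
  exists a c e : nat, let F := (a + c * (m.+1 * n.+1) + e)%N in (0 < F)%N /\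
   ((2 ^ (n.+1 * e + n.+1 * (c * (m.+1 * n.+1).-1))).-1%:R < powR 2 (M * F%:R)) /\
   ((2 ^ ((minn n m).+1 * a + c)).-1%:R <
        powR 2 ((minn n m).+1%:R * (1 - M / n.+1%:R) * F%:R)) /\
   (c = 0%N \/ log2 ((n.+1 ^ m.+1)%:R) <= eps * F%:R).
  move=> hc; exists 1%N, 0%N, 0%N => /=; split => //; split.
    by rewrite !muln0 addn0 expn0 /=; apply: powR_gt0.
  split; last by left.
  rewrite muln1 addn0 mulr1.
  case/orP: hc => [/eqP -> | /eqP ->].
    by apply: lt_pow; rewrite mul0r subr0 mulr1.
  rewrite expn1 /= mul1r; apply: powR_gt1.
  by rewrite subr_gt0 ltr_pdivrMr // mul1r.
case: (boolP ((M == 0) || (minn n m == 0)%N)) => [hc | ]; first exact: hsimple.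
rewrite negb_or => /andP [hM0 hL].
have Mpos : 0 < M by rewrite lt_neqAle eq_sym hM0.
set al := M / n.+1%:R.
have al0 : 0 < al by rewrite divr_gt0.
have al1 : al < 1 by rewrite ltr_pdivrMr // mul1r.
set KN := (m.+1 * n.+1)%N.
have KN1 : (1 <= KN)%N by rewrite muln_gt0.
set lg := log2 ((n.+1 ^ m.+1)%:R).
have lg0 : 0 <= lg.
  rewrite /lg /log2 divr_ge0 // ?ln_ge0 // ?ler1n ?expn_gt0 //.
set B := (2 * KN)%:R / al + 2 / (1 - al) + lg / eps.
set Fn := (Num.Def.trunc B).+1.
have BF : B < Fn%:R by rewrite /Fn truncnS_gt.
have t1 : 0 < (2 * KN)%:R / al by rewrite divr_gt0 // ltr0n muln_gt0.
have t2 : 0 < 2 / (1 - al) by rewrite divr_gt0 // subr_gt0.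
have t3 : 0 <= lg / eps by rewrite divr_ge0 // ltW.
have BF' := BF; rewrite /B in BF'.
set q := Num.Def.trunc (al * Fn%:R).
have Fpos : 0 <= al * Fn%:R by rewrite mulr_ge0 // ltW.
have [q1 q2] : q%:R <= al * Fn%:R /\ al * Fn%:R < q.+1%:R.
  by have /andP[] := truncn_itv Fpos.
have hq : (2 * KN <= q)%N.
  rewrite -ltnS -(ltr_nat R); apply: le_lt_trans q2.
  have : (2 * KN)%:R / al < Fn%:R by lra.
  by rewrite ltr_pdivrMr // mulrC => /ltW.
have hqF : (q + 2 < Fn)%N.
  rewrite -(ltr_nat R) natrD.
  have : 2 / (1 - al) < Fn%:R by lra.
  rewrite ltr_pdivrMr ?subr_gt0 //.
  rewrite mulrBr mulr1 [_ * al]mulrC => h2; lra.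
exists (Fn - q - 2)%N, 2%N, (q - 2 * KN.-1)%N.
have FE := FE_nat hq hqF KN1.
rewrite /= FE; split; first by [].
split.
  apply: lt_pow.
  rewrite (cb_nat n hq KN1).
  rewrite natrM -[M](@divfK _ n.+1%:R) ?gt_eqF // -/al mulrC -mulrA.
  by rewrite mulrCA [q%:R * _]mulrC ler_pM2l.
split; last first.
  right; have : lg / eps < Fn%:R by lra.
  by rewrite ltr_pdivrMr // mulrC => /ltW.
apply: lt_pow.
have L2 : (2 <= (minn n m).+1)%N by rewrite ltnS lt0n.
set L := (minn n m).+1 in L2 *.
have [ha1 ha2] := aux1 hqF.
rewrite natrD natrM natrB // natrB //.
have L2r : 2 <= L%:R :> R by rewrite ler_nat.
have : L%:R * (al * Fn%:R - q%:R) < L%:R * 1.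
  by rewrite ltr_pM2l ?(lt_le_trans _ L2r) //; lra.
rewrite -mulrA mulrBl mul1r [_ * Fn%:R]mulrC.
move=> h; rewrite mulrBr mulr1 in h.
rewrite !mulrBr; lra.
Qed.
Notation piece x := {ffun 'I_x -> 'I_2}.

Lemma card_piece x : #|{: piece x}| = (2 ^ x)%N.
Proof. by rewrite card_ffun !card_ord. Qed.

Lemma piece0_eq (u v : piece 0) : u = v.
Proof. by apply/ffunP => -[]. Qed.

Section Scheme.
Variables (n m a c e : nat).
Local Notation N := n.+1.
Local Notation K := m.+1.
Local Notation U := ('I_K * 'I_N)%type.

Local Notation PartT := (piece a * {ffun U -> piece c} * piece e)%type.
Definition FF := (a + c * (K * N) + e)%N.

Lemma card_part : (2 ^ FF)%N = #|{: PartT}|.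
Proof.
rewrite !card_prod !card_ffun !card_ord card_prod !card_ord.
by rewrite /FF !expnD -expnM.
Qed.

Definition splitf (x : fileT FF) : PartT := enum_val (cast_ord card_part x).
Definition mergef (y : PartT) : fileT FF := cast_ord (esym card_part) (enum_rank y).

Lemma mergeK x : mergef (splitf x) = x.
Proof. by rewrite /mergef /splitf enum_valK cast_ordK. Qed.

Definition Aof y := (splitf y).1.1.
Definition Bof y := (splitf y).1.2.
Definition Cof y := (splitf y).2.

Local Notation S0 := (piece a * 'I_N)%type.
Local Notation Sf := {dffun forall k : 'I_K, S0}.
Definition L := (minn n m).+1.
Definition bc := (N <= K)%N.

Definition shifts (d : demT N K) (s : Sf) : {ffun 'I_K -> 'I_N} :=
  [ffun k' => d k' - (s k').2].
Local Notation Jt := {t : {ffun 'I_K -> 'I_N} | (c == 0)%N ==> (t == 0)}.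
Lemma j0P : (c == 0)%N ==> ((0 : {ffun 'I_K -> 'I_N}) == 0).
Proof. by rewrite eqxx implybT. Qed.
Definition j0 : Jt := exist _ 0 j0P.
Definition Jv d s : Jt := insubd j0 (shifts d s).

Definition Xf (w : libT N FF) (t : {ffun 'I_K -> 'I_N}) : piece c :=
  \sum_(u : U) Bof (w (u.2 + t u.1)) u.

Definition Aslot (w : libT N FF) (d : demT N K) (s : Sf) : {ffun 'I_L -> piece a} :=
  [ffun j : 'I_L => if bc then Aof (w (inord j))
                    else Aof (w (d (inord j))) + (s (inord j)).1].

Local Notation ET := ({ffun 'I_L -> piece a} * piece c)%type.
Definition Ev w d s : ET := (Aslot w d s, Xf w (val (Jv d s))).

Local Notation CT := ({ffun 'I_N -> piece e} * {ffun 'I_N -> {ffun 'I_(#|{: U}|.-1) -> piece c}})%type.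
Definition r0 (k : 'I_K) (sh : 'I_N) : 'I_#|{: U}| := enum_rank ((k, sh) : U).
Definition Cv k sh (w : libT N FF) : CT :=
  ([ffun i => Cof (w i)],
   [ffun i => [ffun j => Bof (w i) (enum_val (lift (r0 k sh) j))]]).
Definition lookup k sh (cv : CT) (i : 'I_N) (u : U) : piece c :=
  if unlift (r0 k sh) (enum_rank u) is Some j then cv.2 i j else 0.

Definition Dec (k : 'I_K) (dk : 'I_N) (x : S0) (t : {ffun 'I_K -> 'I_N})
    (ev : ET) (cv : CT) : fileT FF :=
  let sh := x.2 in
  let Ar := if bc then ev.1 (inord dk) else ev.1 (inord k) - x.1 in
  let Br := [ffun u : U => if u == (k, sh) then
       ev.2 - \sum_(u' : U | u' != (k, sh)) lookup k sh cv (u'.2 + t u'.1) u'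
     else lookup k sh cv dk u] in
  mergef (Ar, Br, cv.1 dk).

Lemma piece_c0 : c = 0%N -> forall u v : piece c, u = v.
Proof. move=> hc; rewrite hc; exact: piece0_eq. Qed.

Lemma lookup_ok k sh w i u : u != (k, sh) -> lookup k sh (Cv k sh w) i u = Bof (w i) u.
Proof.
move=> hu; rewrite /lookup.
have hne : r0 k sh != enum_rank u.
  by apply: contra hu => /eqP /enum_rank_inj ->.
case: (unlift_some hne) => j hj ->.
by rewrite /Cv /= !ffunE -hj enum_rankK.
Qed.

Lemma dec_ok (w : libT N FF) (d : demT N K) (s : Sf) (k : 'I_K) :
  Dec k (d k) (s k) (val (Jv d s)) (Ev w d s) (Cv k (s k).2 w) = w (d k).
Proof.
rewrite /Dec -[RHS]mergeK; congr mergef.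
have hA : (if bc then (Ev w d s).1 (inord (d k)) else (Ev w d s).1 (inord k) - (s k).1)
     = Aof (w (d k)).
  rewrite /Ev /= /Aslot; case: ifP => hbc; rewrite ffunE hbc.
    rewrite inordK ?inord_val //.
    have : (n <= m)%N by exact: hbc.
    by move/minn_idPl => ->; rewrite ltnS -ltnS.
  rewrite inordK ?inord_val ?addrK //.
  have : (m < n)%N by rewrite ltnNge -ltnS; apply/negbT.
  by move/ltnW/minn_idPr => ->; rewrite ltnS -ltnS.
rewrite hA.
have hB : [ffun u : U => if u == (k, (s k).2) then
       (Ev w d s).2 - \sum_(u' : U | u' != (k, (s k).2))
          lookup k (s k).2 (Cv k (s k).2 w) (u'.2 + (val (Jv d s)) u'.1) u'
     else lookup k (s k).2 (Cv k (s k).2 w) (d k) u] = Bof (w (d k)).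
  apply/ffunP => u; rewrite ffunE; case: ifP => hu; last first.
    by rewrite lookup_ok // hu.
  move/eqP: hu => ->.
  have [hc|hc] : (c = 0%N) \/ (c != 0%N).
    by case: (c =P 0%N) => h; [left | right; apply/eqP].
    by apply: piece_c0.
  have hJ : val (Jv d s) = shifts d s.
    by rewrite /Jv insubdK // /in_mem /= (negbTE hc).
  rewrite /Ev /= /Xf hJ (bigD1 (k, (s k).2)) //=.
  rewrite (eq_bigr (fun u' => lookup k (s k).2 (Cv k (s k).2 w) (u'.2 + shifts d s u'.1) u')); last first.
    by move=> u' hu'; rewrite lookup_ok.
  by rewrite addrK /shifts ffunE addrC subrK.
rewrite hB /Cv /= ffunE.
by rewrite /Aof /Bof /Cof; case: (splitf _) => [[]].
Qed.


Definition phi (k : 'I_K) (w : libT N FF) (d : demT N K) (s : Sf) : Sf :=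
  [ffun k' => if k' == k then s k' else ((s k').1 - Aof (w (d k')), d k' - (s k').2)].

Lemma phi_inj k w d : injective (phi k w d).
Proof.
move=> s1 s2 /ffunP h; apply/ffunP => k'; move: (h k'); rewrite !ffunE.
case: ifP => // _.
case: (s1 k') => x1 y1; case: (s2 k') => x2 y2 hp.
have h1 : x1 - Aof (w (d k')) = x2 - Aof (w (d k')) := congr1 fst hp.
have h2 : d k' - y1 = d k' - y2 := congr1 snd hp.
by rewrite (addIr _ h1) (oppr_inj (addrI _ h2)).
Qed.

Definition Cf (k : 'I_K) (x : S0) (p : unit) (w : libT N FF) : 'I_#|{: CT}| :=
  enum_rank (Cv k x.2 w).
Definition Ef (w : libT N FF) (d : demT N K) (p : unit) (s : Sf) : 'I_#|{: ET}| :=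
  enum_rank (Ev w d s).
Definition Jf (d : demT N K) (p : unit) (s : Sf) : Jt := Jv d s.
Definition Gf (k : 'I_K) (dk : 'I_N) (x : S0) (jv : Jt) (eR : 'I_#|{: ET}|)
   (cR : 'I_#|{: CT}|) : fileT FF :=
  Dec k dk x (val jv) (enum_val eR) (enum_val cR).

Definition dc (x : 'I_N) : demT N K := [ffun => x].

Lemma shifts_phi k w d s :
  shifts d (phi k w d s) = [ffun k' => if k' == k then d k - (s k).2 else (s k').2].
Proof.
apply/ffunP => k'; rewrite !ffunE; case: ifP => [/eqP -> //|_] /=.
by rewrite opprB addrC subrK.
Qed.

Lemma Aslot_phi k w d s :
  Aslot w d (phi k w d s) = [ffun j : 'I_L => if bc then Aof (w (inord j))
     else if (inord j : 'I_K) == k then Aof (w (d k)) + (s k).1 else (s (inord j)).1].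
Proof.
apply/ffunP => j; rewrite !ffunE; case: bc => //.
case: ifP => [/eqP -> //|_] /=.
by rewrite addrC subrK.
Qed.

Lemma obs_phi k p (s : Sf) (w : libT N FF) (d : demT N K) :
  ((Cf k ((phi k w d s) k) p w, (phi k w d s) k), (Ef w d p (phi k w d s), Jf d p (phi k w d s)), d k)
  = ((Cf k ((phi k w (dc (d k)) s) k) p w, (phi k w (dc (d k)) s) k),
     (Ef w (dc (d k)) p (phi k w (dc (d k)) s), Jf (dc (d k)) p (phi k w (dc (d k)) s)),
     (dc (d k)) k).
Proof.
have hk : forall d', (phi k w d' s) k = s k by move=> d'; rewrite ffunE eqxx.
rewrite !hk /Ef /Jf /Ev /Jv !shifts_phi !Aslot_phi /dc !ffunE.
by [].
Qed.


Lemma card_CT : #|{: CT}| = (2 ^ (N * e + N * (c * (K * N).-1)))%N.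
Proof.
rewrite card_prod !card_ffun !card_ord card_prod !card_ord.
by rewrite -!expnM -expnD mulnA [(e * N)%N]mulnC [((c * _) * N)%N]mulnC.
Qed.

Lemma card_ET : #|{: ET}| = (2 ^ (L * a + c))%N.
Proof.
rewrite card_prod !card_ffun !card_ord.
by rewrite expnD -expnM [(a * L)%N]mulnC.
Qed.

Lemma card_S0 : #|{: S0}| = (2 ^ a * N)%N.
Proof. by rewrite card_prod card_ffun !card_ord. Qed.

Lemma card_Jt : (#|{: Jt}| <= (if c == 0%N then 1 else N ^ K))%N.
Proof.
case: ifP => hc.
  rewrite card_sig (@leq_trans #|pred1 (0 : {ffun 'I_K -> 'I_N})|) ?card1 //.
rewrite card_sig (leq_trans (max_card _)) //.
by rewrite card_ffun !card_ord.
Qed.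

Lemma Jt_pos : (0 < #|{: Jt}|)%N.
Proof. by apply/card_gt0P; exists j0. Qed.

Lemma log2_Jt (eps : R) : 0 <= eps ->
  (c = 0%N \/ log2 ((N ^ K)%:R) <= eps * FF%:R) -> log2 (#|{: Jt}|%:R) <= eps * FF%:R.
Proof.
move=> he hJ; have hJt := card_Jt; have hpos := Jt_pos.
have [hc|hc] : (c == 0%N) = true \/ (c == 0%N) = false by case: (c == 0%N); [left|right].
  have hJ1 : (#|{: Jt}| <= 1)%N by apply: leq_trans hJt _; rewrite hc.
  have -> : #|{: Jt}| = 1%N by apply/eqP; rewrite eqn_leq hJ1 hpos.
  by rewrite /log2 ln1 mul0r mulr_ge0 // ler0n.
case: hJ => [hc0|hl]; first by rewrite hc0 in hc.
have hJ1 : (#|{: Jt}| <= N ^ K)%N by apply: leq_trans hJt _; rewrite hc.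
apply: le_trans hl.
rewrite /log2 ler_pM2r ?invr_gt0 ?ln_gt0 ?ltr1n // ler_ln ?posrE ?ltr0n ?expn_gt0 //.
by rewrite ler_nat.
Qed.

Lemma ord_le_pred (X : nat) (i : 'I_X) : (i <= X.-1)%N.
Proof. by case: i => i /=; case: X => // X; rewrite ltnS. Qed.

Lemma sum_constR (T : finType) (x : R) : \sum_(t : T) x = #|T|%:R * x.
Proof. by rewrite big_const iter_addr_0 mulr_natl. Qed.

Lemma scheme_ok (M Rt eps : R) : 0 <= eps ->
  ((#|{: CT}|).-1%:R < powR 2 (M * FF%:R)) ->
  ((#|{: ET}|).-1%:R < powR 2 (Rt * FF%:R)) ->
  (c = 0%N \/ log2 ((N ^ K)%:R) <= eps * FF%:R) ->
  private_scheme N K M Rt FF eps.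
Proof.
move=> he hC hE hJ.
exists unit, (fun _ => 1), (fun _ => S0), (fun _ _ => (#|{: S0}|%:R)^-1),
  #|{: CT}|, #|{: ET}|, Jt, Cf, Ef, Jf, Gf.
have S0pos : (0 < #|{: S0}|)%N by rewrite card_S0 muln_gt0 expn_gt0.
split.
  split => [t|]; first exact: ler01.
  by rewrite sum_constR card_unit mulr1.
split.
  move=> k; split => [x|]; first by rewrite invr_ge0 ler0n.
  by rewrite sum_constR mulfV // pnatr_eq0 -lt0n.
split.
  by move=> i; apply: le_lt_trans hC; rewrite ler_nat ord_le_pred.
split.
  by move=> i; apply: le_lt_trans hE; rewrite ler_nat ord_le_pred.
split; first exact: log2_Jt.
split.
  move=> w d p s k; rewrite /Gf /Ef /Cf /Jf !enum_rankK.
  exact: dec_ok.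
move=> Om mu k.
pose obsf := fun (p : unit) (s : Sf) (w : libT N FF) (d : demT N K) =>
  (Cf k (s k) p w, s k, (Ef w d p s, Jf d p s), d k).
apply: (@mi0 unit Sf (libT N FF) _ N K k
  (fun _ _ => 1 * \prod_(k0 < K) #|{: S0}|%:R^-1) ((2 ^ FF)%:R ^- N) (N%:R ^- K)
  obsf (fun p s w x => obsf p (phi k w (dc x) s) w (dc x)) (phi k)).
- exact: phi_inj.
- by [].
- by move=> p s w d; rewrite /obsf obs_phi.
rewrite prodr_const card_ord sum_constR big_const iter_addr_0 card_unit /=.
rewrite card_ffun !card_ord card_ffun card_ord !natrX.
have h0 : #|{: S0}|%:R != 0 :> R by rewrite pnatr_eq0 -lt0n.
have h1 : (2 ^ FF)%:R != 0 :> R by rewrite pnatr_eq0 expn_eq0.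
have h2 : N%:R != 0 :> R by rewrite pnatr_eq0.
rewrite mulr1n mul1r divfK ?expf_neq0 // mulVf ?expf_neq0 ?pnatr_eq0 // mul1r.
by rewrite -exprMn mulfV ?expr1n.
Qed.

End Scheme.

Theorem theorem2 (N K : nat) (M : R) :
  (0 < N)%N -> (0 < K)%N -> 0 <= M <= N%:R ->
  achievable_private N K M (Num.min N%:R K%:R * (1 - M / N%:R)).
Proof.
case: N => // n _; case: K => // m _ hM eps heps.
have [a [c [e]]] := feas m hM heps.
move=> [hF [h1 [h2 h3]]].
exists (FF n m a c e); split => //.
apply: scheme_ok; first exact: ltW.
- by rewrite card_CT.
- by rewrite card_ET.
- exact: h3.
Qed.
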